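(* Let $p$ be an odd prime, $H\cong\mathbb{Z}_p^3$, and $\mathcal A$ an exceptional S-ring over $H$. Then $|\mathrm{Aut}(\mathcal A)|=p^4$ and $\mathrm{Iso}_1(\mathcal A)=\mathrm{Aut}(H)$.
   Context: $H$ is written additively (identity denoted $1$ in $\mathrm{Iso}_1$ means the zero element). $\mathrm{Cay}(H,S)$ is the digraph on $H$ with arcs $(x,x+s)$, $s\in S$. An S-ring over $H$ is a subalgebra $\mathcal A\subseteq\mathbb{Q}H$ spanned by $\underline{T}=\sum_{t\in T}t$ for $T$ in a partition $\mathrm{Bs}(\mathcal A)$ of $H$ (basic sets) with $\{0\}\in\mathrm{Bs}(\mathcal A)$ and $-T\in\mathrm{Bs}(\mathcal A)$ for all $T$. Two S-rings over groups $H,K$ are Cayley isomorphic if some group isomorphism $H\to K$ maps the basic sets of the first onto the basic sets of the second. $\mathcal A$ is exceptional if it is Cayley isomorphic to the S-ring over $\mathbb{Z}_p^3$ whose basic sets are the orbits of the cyclic group generated by the linear map given by the matrix $\begin{pmatrix}1&1&0\\0&1&1\\0&0&1\end{pmatrix}$. $\mathrm{Aut}(\mathcal A)=\bigcap_{T\in\mathrm{Bs}(\mathcal A)}\mathrm{Aut}(\mathrm{Cay}(H,T))$. $\mathrm{Iso}_1(\mathcal A)$ is the set of bijections $f:H\to H$ fixing $0$ such that $\{\mathrm{Cay}(H,T)^f:T\in\mathrm{Bs}(\mathcal A)\}=\{\mathrm{Cay}(H,S):S\in\mathrm{Bs}(\mathcal B)\}$ for some S-ring $\mathcal B$ over $H$.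 *)

(* Defs.v *)
From HB Require Import structures.
From mathcomp Require Import all_boot all_order all_fingroup all_algebra.
Set Implicit Arguments. Unset Strict Implicit. Unset Printing Implicit Defensive.
Import GRing.Theory.
Local Open Scope ring_scope.

Section SRing.
Variable H : finZmodType.

Definition setN (T : {set H}) : {set H} := [set - x | x in T].

(* Structure constant: number of pairs (a,b) in T1 x T2 with a + b = x,
   i.e. the coefficient of x in  underline(T1) * underline(T2)  in QH. *)
Definition sconst (T1 T2 : {set H}) (x : H) : nat :=
  #|[set u in setX T1 T2 | u.1 + u.2 == x]|.

(* P is the set of basic sets of an S-ring over H: a partition of H,
   containing {0}, closed under T |-> -T, and whose span in QH is closed under
   multiplication (each product underline(T1)*underline(T2) is constant on every
   basic set, i.e. is a linear combination of the underline(T3)). *)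
Definition is_Sring (P : {set {set H}}) : Prop :=
  [/\ partition P [set: H],
      [set 0] \in P,
      (forall T, T \in P -> setN T \in P) &
      (forall T1 T2 T3, T1 \in P -> T2 \in P -> T3 \in P ->
         forall x y, x \in T3 -> y \in T3 -> sconst T1 T2 x = sconst T1 T2 y)].

Definition Cay (T : {set H}) : {set H * H} := [set e | e.2 - e.1 \in T].

Definition digraph_img (f : {perm H}) (E : {set H * H}) : {set H * H} :=
  [set (f e.1, f e.2) | e in E].

(* Aut(A) = intersection of the Aut(Cay(H,T)), T basic *)
Definition AutS (P : {set {set H}}) : {set {perm H}} :=
  [set g : {perm H} | [forall T in P, forall x, forall y,
      ((y - x) \in T) == ((g y - g x) \in T)]].

Definition Iso1 (P : {set {set H}}) (f : {perm H}) : Prop :=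
  f 0 = 0 /\
  exists Q : {set {set H}}, is_Sring Q /\
    [set digraph_img f (Cay T) | T in P] = [set Cay S | S in Q].

Definition grp_iso (K : finZmodType) (f : H -> K) : Prop :=
  {morph f : x y / x + y} /\ bijective f.

End SRing.

(* The exceptional S-ring over Z_p^3 = column vectors over F_p. *)
Definition exc_mx (p : nat) : 'M['F_p]_3 :=
  \matrix_(i, j) (if (j == i :> nat) || (j == i.+1 :> nat) then 1 else 0).

(* orbit of v under the cyclic group <M>; since p is odd, M^p = 1, so
   <M> = {M^k | k < p} *)
Definition exc_orbit (p : nat) (v : 'cV['F_p]_3) : {set 'cV['F_p]_3} :=
  [set (exc_mx p ^+ k) *m v | k : 'I_p].

Definition exc_bs (p : nat) : {set {set 'cV['F_p]_3}} :=
  [set exc_orbit v | v : 'cV['F_p]_3].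

Definition exceptional (H : finZmodType) (p : nat) (P : {set {set H}}) : Prop :=
  exists f : H -> 'cV['F_p]_3, grp_iso f /\ [set f @: T | T : {set H} in P] = exc_bs p.

(* Main.v *)
Require Import Defs.
From HB Require Import structures.
From mathcomp Require Import all_boot all_order all_fingroup all_algebra.
From mathcomp Require Import ring.
Set Implicit Arguments. Unset Strict Implicit. Unset Printing Implicit Defensive.
Import GRing.Theory.
Local Open Scope ring_scope.

Section Mat.
Variable p : nat.
Hypothesis pP : prime p.
Hypothesis podd : odd p.
Local Notation V := 'cV['F_p]_3.
Local Notation M := (exc_mx p).

Definition i0 : 'I_3 := @Ordinal 3 0 isT.
Definition i1 : 'I_3 := @Ordinal 3 1 isT.
Definition i2 : 'I_3 := @Ordinal 3 2 isT.

Definition v3 (a b c : 'F_p) : V :=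
  \col_(i < 3) (if i == i0 then a else if i == i1 then b else c).

Lemma v3E (v : V) : v = v3 (v i0 0) (v i1 0) (v i2 0).
Proof.
apply/colP => i; rewrite mxE.
by case: i => [[|[|[|]]] //] Hi; congr (v _ _); apply/val_inj.
Qed.

Lemma v3_0 a b c : v3 a b c i0 0 = a. Proof. by rewrite mxE. Qed.
Lemma v3_1 a b c : v3 a b c i1 0 = b. Proof. by rewrite mxE. Qed.
Lemma v3_2 a b c : v3 a b c i2 0 = c. Proof. by rewrite mxE. Qed.

Lemma v3_inj a b c a' b' c' : v3 a b c = v3 a' b' c' -> [/\ a = a', b = b' & c = c'].
Proof.
move=> h; split.
- by rewrite -(v3_0 a b c) h v3_0.
- by rewrite -(v3_1 a b c) h v3_1.
- by rewrite -(v3_2 a b c) h v3_2.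
Qed.

Lemma v3D a b c a' b' c' : v3 a b c + v3 a' b' c' = v3 (a + a') (b + b') (c + c').
Proof. by apply/colP => i; rewrite !mxE; case: ifP => _ //; case: ifP. Qed.
Lemma v3N a b c : - v3 a b c = v3 (- a) (- b) (- c).
Proof. by apply/colP => i; rewrite !mxE; case: ifP => _ //; case: ifP. Qed.
Lemma v3B a b c a' b' c' : v3 a b c - v3 a' b' c' = v3 (a - a') (b - b') (c - c').
Proof. by rewrite v3N v3D. Qed.
Lemma v3_zero : (0 : V) = v3 0 0 0.
Proof. by apply/colP => i; rewrite !mxE; case: ifP => _ //; case: ifP. Qed.

Lemma mulM_v3 a b c : M *m v3 a b c = v3 (a + b) (b + c) c.
Proof.
apply/colP => i; rewrite !mxE !big_ord_recl big_ord0 !mxE /=.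
case: i => [[|[|[|]]] //] Hi /=; ring.
Qed.

Lemma Mpow_v3 k a b c :
  M ^+ k *m v3 a b c = v3 (a + k%:R * b + 'C(k, 2)%:R * c) (b + k%:R * c) c.
Proof.
elim: k => [|k IH].
  by rewrite expr0 mul1mx bin0n !mul0r !addr0.
rewrite exprS -[_ * _]/(_ *m _) -mulmxA IH mulM_v3 binS bin1 !natrD; congr v3; ring.
Qed.

Lemma natFp_eq k j : (k < p)%N -> (j < p)%N -> (k%:R : 'F_p) = j%:R -> k = j.
Proof.
move=> hk hj h; have := val_Fp_nat pP k; rewrite h val_Fp_nat // !modn_small //.
Qed.

Lemma natFp0 k : (k < p)%N -> (k%:R : 'F_p) = 0 -> k = 0%N.
Proof. by move=> hk h; apply: natFp_eq => //; apply: prime_gt0. Qed.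

Lemma mx_ext (A B : 'M['F_p]_3) : (forall v : V, A *m v = B *m v) -> A = B.
Proof.
move=> h; apply/matrixP => i j.
have := congr1 (fun m : V => m i 0) (h (delta_mx j 0)).
by rewrite -!colE !mxE.
Qed.

Lemma Mp : M ^+ p = 1.
Proof.
apply: mx_ext => v; rewrite mul1mx [v]v3E Mpow_v3 pchar_Fp_0 //.
have p2 : (2 < p)%N.
  have := prime_gt1 pP; case: p podd => [|[|[|]]] //.
have h2 : ('C(p, 2)%:R : 'F_p) = 0.
  by apply/eqP; rewrite -(dvdn_pcharf (pchar_Fp pP)) prime_dvd_bin.
by rewrite h2 !mul0r !addr0.
Qed.

Lemma Mpow_mod k : M ^+ k = M ^+ (k %% p).
Proof. by rewrite {1}(divn_eq k p) exprD mulnC exprM Mp expr1n mul1r. Qed.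

Lemma Mpow_add m n (v : V) : M ^+ m *m (M ^+ n *m v) = M ^+ (m + n) *m v.
Proof. by rewrite mulmxA exprD. Qed.

Lemma Mpk k : (p.-1 * k + k = p * k)%N.
Proof. by rewrite addnC -mulSn prednK // prime_gt0. Qed.

Lemma Minv k (v : V) : M ^+ (p.-1 * k) *m (M ^+ k *m v) = v.
Proof. by rewrite Mpow_add Mpk exprM Mp expr1n mul1mx. Qed.

Lemma Minv' k (v : V) : M ^+ k *m (M ^+ (p.-1 * k) *m v) = v.
Proof. by rewrite Mpow_add addnC Mpk exprM Mp expr1n mul1mx. Qed.

Lemma orbitP (w v : V) : reflect (exists k : nat, w = M ^+ k *m v) (w \in exc_orbit v).
Proof.
apply: (iffP imsetP) => [[k _ ->]|[k ->]]; first by exists k.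
by exists (Ordinal (ltn_pmod k (prime_gt0 pP))) => //=; rewrite -Mpow_mod.
Qed.

Lemma orbit_act k (v w : V) : (M ^+ k *m w \in exc_orbit v) = (w \in exc_orbit v).
Proof.
apply/orbitP/orbitP => [[j hj]|[j ->]].
  by exists (p.-1 * k + j)%N; rewrite -(Minv k w) hj Mpow_add.
by exists (k + j)%N; rewrite Mpow_add.
Qed.

Lemma orbit_self (v : V) : v \in exc_orbit v.
Proof. by apply/orbitP; exists 0%N; rewrite expr0 mul1mx. Qed.

Definition Rel (G : V -> V) :=
  forall x y, exists k : nat, G y - G x = M ^+ k *m (y - x).

Lemma RelLt G : Rel G -> forall x y,
  exists2 k, (k < p)%N & G y - G x = M ^+ k *m (y - x).
Proof.
move=> hG x y; have [k hk] := hG x y.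
by exists (k %% p)%N; [apply: ltn_pmod; apply: prime_gt0 | rewrite -Mpow_mod].
Qed.

Lemma from_eq (a b c : 'F_p) : a = b -> b - a = c -> c = 0.
Proof. by move=> -> <-; rewrite subrr. Qed.

Lemma rigid G : Rel G -> G 0 = 0 -> G (v3 0 0 1) = v3 0 0 1 -> forall v, G v = v.
Proof.
move=> hG G0 Ge.
have step2 : forall x y, G (v3 x y 0) = v3 x y 0.
  move=> x y.
  have [k hk e1] := RelLt hG 0 (v3 x y 0).
  rewrite G0 !subr0 Mpow_v3 in e1.
  have [j hj e2] := RelLt hG (v3 x y 0) (v3 0 0 1).
  rewrite Ge e1 !v3B Mpow_v3 in e2.
  have [E1 E2 _] := v3_inj e2.
  have hj0 : (j%:R : 'F_p) = 0 by apply: (from_eq E2); ring.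
  have j0 := natFp0 hj hj0; subst j.
  have hky : (k%:R * y : 'F_p) = 0.
    by apply: (from_eq E1); rewrite /= !mul0r; ring.
  by rewrite e1 hky !mulr0 !addr0.
move=> v; rewrite [v]v3E.
set x := v i0 0; set y := v i1 0; set z := v i2 0.
have [->|z0] := eqVneq z 0; first by rewrite step2.
have [k hk e1] := RelLt hG 0 (v3 x y z).
rewrite G0 !subr0 Mpow_v3 in e1.
have [j hj e2] := RelLt hG (v3 0 1 0) (v3 x y z).
rewrite step2 e1 !v3B Mpow_v3 in e2.
have [E1 E2 _] := v3_inj e2.
have hkj : ((j%:R - k%:R) * z : 'F_p) = 0 by apply: (from_eq E2); ring.
have /eqP : (j%:R - k%:R : 'F_p) = 0.
  by apply/eqP; move: hkj => /eqP; rewrite mulf_eq0 (negPf z0) orbF.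
rewrite subr_eq0 => /eqP /(natFp_eq hj hk) kj; subst j.
have : (- k%:R : 'F_p) = 0 by apply: (from_eq E1); ring.
move/eqP; rewrite oppr_eq0 => /eqP hk0.
have k0 := natFp0 hk hk0; subst k.
by rewrite e1 /= !mul0r !addr0.
Qed.

Lemma charV G : Rel G -> exists k, forall v, G v = M ^+ k *m v + G 0.
Proof.
move=> hG; have [k _ ek] := RelLt hG 0 (v3 0 0 1).
pose Hh := fun v => M ^+ (p.-1 * k) *m (G v - G 0).
have hR : Rel Hh.
  move=> x y; have [j ej] := hG x y; exists (p.-1 * k + j)%N.
  rewrite /Hh -mulmxBr.
  have -> : G y - G 0 - (G x - G 0) = G y - G x by rewrite opprB addrA subrK.
  by rewrite ej Mpow_add.
have H0 : Hh 0 = 0 by rewrite /Hh subrr mulmx0.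
have He : Hh (v3 0 0 1) = v3 0 0 1 by rewrite /Hh ek subr0 Minv.
exists k => v; rewrite -{2}(rigid hR H0 He v) /Hh Minv' subrK //.
Qed.
End Mat.

Section HLevel.
Variable p : nat.
Hypothesis pP : prime p.
Hypothesis podd : odd p.
Local Notation V := 'cV['F_p]_3.
Local Notation M := (exc_mx p).
Variable H : finZmodType.
Variable P : {set {set H}}.
Variable F : H -> V.
Variable Finv : V -> H.
Hypothesis Fadd : {morph F : x y / x + y}.
Hypothesis FK : cancel F Finv.
Hypothesis FiK : cancel Finv F.
Hypothesis hP : [set F @: T | T : {set H} in P] = exc_bs p.

Lemma F0 : F 0 = 0.
Proof. by apply: (addrI (F 0)); rewrite -Fadd !addr0. Qed.
Lemma FN x : F (- x) = - F x.
Proof. by apply: (addrI (F x)); rewrite -Fadd !subrr F0. Qed.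
Lemma FB x y : F (x - y) = F x - F y.
Proof. by rewrite Fadd FN. Qed.
Lemma Finj : injective F. Proof. exact: can_inj FK. Qed.
Lemma Fi0 : Finv 0 = 0. Proof. by rewrite -F0 FK. Qed.
Lemma memF (T : {set H}) x : (F x \in F @: T) = (x \in T).
Proof. by apply: mem_imset; exact: Finj. Qed.

Lemma T_orbit T : T \in P -> exists v, F @: T = exc_orbit v.
Proof.
move=> TP; have : F @: T \in exc_bs p by rewrite -hP; apply: imset_f.
by case/imsetP => v _ ->; exists v.
Qed.

Lemma orbit_T v : exists2 T, T \in P & F @: T = exc_orbit v.
Proof.
have : exc_orbit v \in [set F @: T | T : {set H} in P] by rewrite hP; apply: imset_f.
by case/imsetP => T TP e; exists T.
Qed.

Lemma Hchar (g : H -> H) :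
  (forall T, T \in P -> forall x y, y - x \in T -> g y - g x \in T) ->
  exists2 k, (k < p)%N & forall x, F (g x) = M ^+ k *m F x + F (g 0).
Proof.
move=> hg; pose G := fun v => F (g (Finv v)).
have hR : Rel G.
  move=> v w; have [T TP eT] := orbit_T (w - v).
  have : Finv w - Finv v \in T by rewrite -memF FB !FiK eT (orbit_self pP podd).
  move/(hg T TP); rewrite -memF FB eT => /(orbitP pP podd) [k hk]; exists k.
  exact: hk.
have [k hk] := charV pP podd hR.
exists (k %% p)%N; first by apply: ltn_pmod; apply: prime_gt0.
by move=> x; have := hk (F x); rewrite /G FK Fi0 -(Mpow_mod pP podd).
Qed.

Definition phi_fun (k : nat) (t : V) (h : H) := Finv (M ^+ k *m F h + t).

Lemma phi_inj k t : injective (phi_fun k t).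
Proof.
move=> a b /(can_inj FiK)/addIr e.
have := congr1 (mulmx (M ^+ (p.-1 * k))) e; rewrite !(Minv pP podd) //; exact: Finj.
Qed.

Definition Phi (kt : 'I_p * V) : {perm H} := perm (@phi_inj kt.1 kt.2).

Lemma Phi_in kt : Phi kt \in AutS P.
Proof.
rewrite inE; apply/forall_inP => T TP; apply/forallP => x; apply/forallP => y.
rewrite !permE /phi_fun.
have [v ev] := T_orbit TP.
rewrite -!memF ev !FB !FiK.
have -> : M ^+ kt.1 *m F y + kt.2 - (M ^+ kt.1 *m F x + kt.2)
    = M ^+ kt.1 *m (F y - F x).
  by rewrite opprD addrACA subrr addr0 -mulmxBr.
by rewrite (orbit_act pP podd).
Qed.

Lemma AutS_Phi : AutS P = Phi @: setT.
Proof.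
apply/setP => g; apply/idP/imsetP => [gA|[kt _ ->]]; last exact: Phi_in.
have hg : forall T, T \in P -> forall x y, y - x \in T -> g y - g x \in T.
  move=> T TP x y; move: gA; rewrite inE => /forall_inP /(_ T TP).
  by move=> /forallP /(_ x) /forallP /(_ y) /eqP <-.
have [k hk hk'] := Hchar hg.
exists (Ordinal hk, F (g 0)) => //.
by apply/permP => x; rewrite permE /phi_fun /= -hk' FK.
Qed.

Lemma Phi_inj : injective Phi.
Proof.
move=> [k t] [k' t'] e.
have e0 := congr1 (fun f : {perm H} => f 0) e.
have e2 := congr1 (fun f : {perm H} => f (Finv (v3 0 0 1))) e.
rewrite /= !permE /phi_fun F0 !mulmx0 !add0r in e0.
simpl in e0. have tt' := can_inj FiK e0; subst t'.
rewrite /= !permE /phi_fun FiK in e2.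
move/(can_inj FiK)/addIr: e2; rewrite !Mpow_v3 => /v3_inj [_ E _].
have : (k%:R : 'F_p) = k'%:R by move: E; rewrite !mulr1 !add0r.
move/(natFp_eq pP (ltn_ord k) (ltn_ord k')) => kk.
by have -> : k = k' := val_inj kk.
Qed.

Lemma card_AutS : #|AutS P| = (p ^ 4)%N.
Proof.
rewrite AutS_Phi card_imset; last exact: Phi_inj.
by rewrite cardsT card_prod card_ord card_mx card_Fp // muln1 -expnS.
Qed.

Lemma iso_additive (f : {perm H}) : Iso1 P f -> {morph f : x y / x + y}.
Proof.
case=> f0 [Q [_ eQ]].
pose g (s : H) := fun x => (f^-1)%g (f x + s).
have hg s : forall T, T \in P -> forall x y, y - x \in T -> g s y - g s x \in T.
  move=> T TP x y hxy.
  have : digraph_img f (Cay T) \in [set Cay S | S in Q] by rewrite -eQ; apply: imset_f.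
  case/imsetP => S _ eS.
  have h1 : (f x, f y) \in digraph_img f (Cay T).
    by apply/imsetP; exists (x, y) => //; rewrite inE.
  rewrite eS inE /= in h1.
  have : (f x + s, f y + s) \in Cay S.
    by rewrite inE /= opprD addrACA subrr addr0.
  rewrite -eS => /imsetP [[a b]]; rewrite inE /= => hab [ea eb].
  by rewrite /g ea eb !permK.
have gcomm s u x : g s (g u x) = g u (g s x).
  by rewrite /g !permKV addrAC.
have g0 s : g s 0 = (f^-1)%g s by rewrite /g f0 add0r.
pose u1 := f (Finv (v3 0 1 0)).
pose s2 := f (Finv (v3 0 0 1)).
have tu1 : F (g u1 0) = v3 0 1 0 by rewrite g0 permK FiK.
have ts2 : F (g s2 0) = v3 0 0 1 by rewrite g0 permK FiK.
have [a ha Ha] := Hchar (hg u1).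
have [b hb Hb] := Hchar (hg s2).
have a0 : a = 0%N.
  have := Ha (g s2 0); rewrite gcomm Hb tu1 ts2 !Mpow_v3 !v3D => /v3_inj [_ E _].
  apply: (natFp0 pP ha).
  move: E; rewrite !mulr0 !mulr1 !addr0 !add0r => /(congr1 (fun t => t - 1)).
  by rewrite /= subrr addrK.
subst a.
have gs s x : g s x = x + g s 0.
  have [c hc Hc] := Hchar (hg s).
  have c0 : c = 0%N.
    have := Hc (g u1 0); rewrite gcomm Ha tu1 expr0 mul1mx Mpow_v3 [F (g s 0) + _]addrC.
    move=> /(congr1 (fun w => w - F (g s 0))); rewrite /= !addrK.
    move=> /v3_inj [E _ _]; apply: (natFp0 pP hc).
    by move: E; rewrite !mulr0 !mulr1 !addr0 !add0r.
  subst c; apply: Finj; rewrite Hc expr0 mul1mx Fadd //.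
move=> x y.
have := gs (f y) x; rewrite g0 permK /g => e.
by rewrite -e permKV.
Qed.
End HLevel.

Section Additive.
Variable H : finZmodType.
Variable P : {set {set H}}.
Hypothesis hS : is_Sring P.
Variable f : {perm H}.
Hypothesis fD : {morph f : x y / x + y}.

Lemma f0 : f 0 = 0.
Proof. by apply: (addrI (f 0)); rewrite -fD !addr0. Qed.
Lemma fN x : f (- x) = - f x.
Proof. by apply: (addrI (f x)); rewrite -fD !subrr f0. Qed.
Lemma fB x y : f (x - y) = f x - f y.
Proof. by rewrite fD fN. Qed.
Lemma memf (T : {set H}) x : (f x \in f @: T) = (x \in T).
Proof. by apply: mem_imset; exact: perm_inj. Qed.

Lemma Cay_img T : digraph_img f (Cay T) = Cay (f @: T).
Proof.
apply/setP => [[a b]]; rewrite [in RHS]inE /=; apply/imsetP/idP.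
  by case=> [[x y]]; rewrite inE /= => hxy [-> ->]; rewrite -fB memf.
move=> h; exists ((f^-1)%g a, (f^-1)%g b); last by rewrite /= !permKV.
by rewrite inE /= -memf fB !permKV.
Qed.

Lemma sconst_f (A B : {set H}) z : sconst (f @: A) (f @: B) (f z) = sconst A B z.
Proof.
rewrite /sconst; pose h := fun u : H * H => (f u.1, f u.2).
have h_inj : injective h.
  by move=> [a b] [c d] [/perm_inj -> /perm_inj ->].
have -> : [set u in setX (f @: A) (f @: B) | u.1 + u.2 == f z]
    = h @: [set u in setX A B | u.1 + u.2 == z].
  apply/setP => u.
  have -> : u = h ((f^-1)%g u.1, (f^-1)%g u.2) by case: u => a b; rewrite /h /= !permKV.
  by rewrite (mem_imset _ _ h_inj) !inE /= !memf -fD (inj_eq (@perm_inj _ f)).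
by rewrite card_imset.
Qed.

Lemma additive_iso : Iso1 P f.
Proof.
case: hS => part zero neg sc.
split; first exact: f0.
exists [set f @: T | T : {set H} in P]; split; last first.
  by rewrite -imset_comp; apply: eq_imset => T /=; rewrite Cay_img.
have fT : f @: [set: H] = [set: H].
  by apply/setP => x; rewrite inE -(permKV f x) memf inE.
split.
- by rewrite -fT imset_partition //; exact: perm_inj.
- have <- : f @: [set 0] = [set 0] by rewrite imset_set1 f0.
  by apply: imset_f.
- move=> S /imsetP [T TP ->].
  have -> : setN (f @: T) = f @: setN T.
    by rewrite /setN -!imset_comp; apply: eq_imset => x /=; rewrite fN.
  by apply: imset_f; apply: neg.
- move=> S1 S2 S3 /imsetP [T1 T1P ->] /imsetP [T2 T2P ->] /imsetP [T3 T3P ->].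
  move=> x y /imsetP [x' hx' ->] /imsetP [y' hy' ->].
  by rewrite !sconst_f; apply: (sc T1 T2 T3).
Qed.
End Additive.

Theorem lemma2p17 (p : nat) (H : finZmodType) (P : {set {set H}}) :
  prime p -> odd p ->
  (exists f : H -> 'cV['F_p]_3, grp_iso f) ->
  is_Sring P -> exceptional p P ->
  #|AutS P| = (p ^ 4)%N /\
  (forall f : {perm H}, Iso1 P f <-> {morph f : x y / x + y}).
Proof.
move=> pP podd _ hS [F [[Fadd [Finv FK FiK]] hP]].
split; first exact: (card_AutS pP podd Fadd FK FiK hP).
move=> f; split; first exact: (iso_additive pP podd Fadd FK FiK hP).
exact: additive_iso.
Qed.
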